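(* Let $n$ be a positive integer and $w_1\le\dots\le w_m$ a feasible partition of $n$ with partial sums $R_i=w_1+\dots+w_i$, $R_0=0$. Then for every $1\le i\le m$, $R_i \ge \frac{3w_i-1}{2}$.
   Context: A weighing partition of a positive integer $n$ is a multiset of positive integers summing to $n$ such that every integer $\ell$ with $1\le\ell\le n$ is a sum $\sum_j u_jw_j$ with $u_j\in\{-1,0,1\}$. A feasible partition of $n$ is a weighing partition of $n$ whose number of parts $m$ is minimal among all weighing partitions of $n$, written $w_1\le\dots\le w_m$. *)

(* Defs.v *)
From mathcomp Require Import all_boot all_order all_algebra.
Set Implicit Arguments. Unset Strict Implicit. Unset Printing Implicit Defensive.
Import Order.TTheory GRing.Theory Num.Theory.

(* A multiset of positive integers is represented by a list [s : seq nat]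
   (order irrelevant). *)

Definition signed_representable (s : seq nat) (l : int) : Prop :=
  exists u : seq int,
    size u = size s /\
    all (fun x : int => x \in [:: (-1)%R; 0%R; 1%R]) u /\
    (\sum_(j < size s) u`_j * ((nth 0%N s j)%:Z))%R = l.

Definition weighing_partition (n : nat) (s : seq nat) : Prop :=
  all (fun w => 0 < w) s /\ sumn s = n /\
  forall l : nat, 1 <= l <= n -> signed_representable s l%:Z.

Definition feasible_partition (n : nat) (s : seq nat) : Prop :=
  weighing_partition n s /\
  forall t : seq nat, weighing_partition n t -> size s <= size t.

(* Main.v *)
From mathcomp Require Import all_boot all_order all_algebra.
From mathcomp Require Import zify ring lra.
Import Order.TTheory GRing.Theory Num.Theory.
Require Import Defs.

Lemma key (n : nat) (s : seq nat) k : sorted leq s -> k < size s ->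
  weighing_partition n s ->
  nth 0 s k <= 2 * (\sum_(0 <= j < k) nth 0 s j) + 1.
Proof.
move=> so ks [_ [sn rep]].
set N := size s; set w := nth 0 s k.
set R := \sum_(0 <= j < k) nth 0 s j.
set T := \sum_(k <= j < N) nth 0 s j.
have nRT : n = R + T.
  by rewrite -sn sumnE (big_nth 0) /R /T -big_cat_nat //= ltnW.
have wT : w <= T.
  by rewrite /T big_ltn //= leq_addr.
rewrite leqNgt; apply/negP => big.
have [u [su [uall ueq]]] := rep (T - R - 1) ltac:(lia).
have uP : forall j, j < N -> (u`_j = -1 \/ u`_j = 0 \/ u`_j = 1)%R.
  move=> j jN; have := all_nthP (0:int) uall j; rewrite su => /(_ jN).
  by rewrite !inE => /orP[/eqP->|/orP[/eqP->|/eqP->]]; auto.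
move: ueq; rewrite -(big_mkord xpredT (fun j => u`_j * (nth 0%N s j)%:Z)%R).
rewrite (big_cat_nat _ (n:=k)) //=; last by rewrite ltnW.
set A := (\sum_(0 <= j < k) _)%R; set B := (\sum_(k <= j < N) _)%R.
move=> eqAB.
have A1 : (A <= R%:Z)%R.
  rewrite /R -natz natr_sum; apply: ler_sum_nat => j /andP[_ jk].
  have [->|[->|->]] := uP j ltac:(lia); rewrite ?mulN1r ?mul0r ?mul1r -?natz; lia.
have A2 : (- R%:Z <= A)%R.
  rewrite /R -natz natr_sum -sumrN; apply: ler_sum_nat => j /andP[_ jk].
  have [->|[->|->]] := uP j ltac:(lia); rewrite ?mulN1r ?mul0r ?mul1r; lia.
have TB : (T%:Z - B = \sum_(k <= j < N) (1 - u`_j) * (nth 0%N s j)%:Z)%R.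
  rewrite /T -natz natr_sum /B -sumrB; apply: eq_bigr => j _; ring.
have cases : (T%:Z - B == 0 \/ w%:Z <= T%:Z - B)%R.
  rewrite TB.
  pose P (x : int) := (0 <= x)%R && ((x == 0) || (w%:Z <= x)%R).
  suff : P (\sum_(k <= j < N) (1 - u`_j) * (nth 0%N s j)%:Z)%R.
    by case/andP => _ /orP[]; auto.
  rewrite big_nat; apply: (big_ind P).
  - by rewrite /P lexx eqxx.
  - move=> x y /andP[x0 /orP[/eqP->|xw]] /andP[y0 /orP[/eqP->|yw]];
      rewrite /P; apply/andP; split; try lia; apply/orP; lia.
  move=> j /andP[kj jN].
  have : w <= nth 0 s j.
    by apply: (sorted_leq_nth leq_trans leqnn 0 so); rewrite ?inE //; lia.
  rewrite /P; have [->|[->|->]] := uP j jN => wj; apply/andP; split;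
    try lia; apply/orP; lia.
case: cases => [/eqP|] h; lia.
Qed.

Theorem mainTheorem4 (n : nat) (s : seq nat) :
  0 < n -> sorted leq s -> feasible_partition n s ->
  forall i : nat, 1 <= i <= size s ->
    ((3%:R * (nth 0 s i.-1)%:R - 1) / 2%:R <= ((\sum_(j < i) nth 0 s j)%N)%:R :> rat)%R.
Proof.
move=> _ so [wp _] i /andP[i1 iN].
have ks : i.-1 < size s by lia.
have := @key n s i.-1 so ks wp.
have -> : (\sum_(j < i) nth 0 s j = \sum_(0 <= j < i.-1) nth 0 s j + nth 0 s i.-1)%N.
  by rewrite -big_nat_recr //= -(big_mkord xpredT) (ltn_predK i1).
set R := (\sum_(0 <= j < i.-1) nth 0 s j)%N; set w := nth 0 s i.-1.
move=> h.
rewrite ler_pdivrMr // lerBlDr.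
have -> : ((((R + w)%:R * 2 + 1) : rat) = ((R+w)*2+1)%N%:R)%R by rewrite !natrD !natrM natrD.
have -> : ((3 * w%:R : rat) = (3*w)%N%:R)%R by rewrite natrM.
rewrite ler_nat; lia.
Qed.
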